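(* A choice function $C$ is consistent if and only if the assessment $\mathcal{A}_C$ is consistent.
   Context: Let $\mathcal{X}$ be a nonempty set and let $\mathscr{V}$ be the real vector space of all functions $u:\mathcal{X}\to\mathbb{R}$ (options), with pointwise operations. For $u,v\in\mathscr{V}$, $u\le v$ iff $u(x)\le v(x)$ for all $x\in\mathcal{X}$, and $u<v$ iff $u\le v$ and $u\neq v$. Let $\mathscr{V}_{>0}=\{u\in\mathscr{V}:0<u\}$ and $\mathscr{V}^s_{>0}=\{\{u\}:u\in\mathscr{V}_{>0}\}$. Let $\mathscr{Q}$ be the set of all finite subsets of $\mathscr{V}$ (including $\emptyset$). For $A\in\mathscr{Q}$ and $u\in\mathscr{V}$, $A-u=\{v-u:v\in A\}$. For a positive integer $n$, $\mathbb{R}^{n,+}=\{\boldsymbol\lambda\in\mathbb{R}^n:\lambda_j\ge0\ \forall j,\ \sum_j\lambda_j>0\}$, and for $\boldsymbol\lambda\in\mathbb{R}^n$, $\mathbf u=(u_1,\dots,u_n)\in\mathscr{V}^n$, $\boldsymbol\lambda\mathbf u=\sum_{j=1}^n\lambda_ju_j$. A choice function is a map $C:\mathscr{Q}\to\mathscr{Q}$ with $C(A)\subseteq A$ for all $A$; its rejection function is $R_C(A)=A\setminus C(A)$, and $K_C=\{A\in\mathscr{Q}:0\notin C(A\cup\{0\})\}$. $C$ is coherent if: (C0) $C(A)\neq\emptyset$ for all nonempty $A\in\mathscr{Q}$; (C1) for all $A\in\mathscr{Q}$ and $u\in A$: $u\in C(A)\iff 0\in C(A-u)$; (C2) $\{u\}\in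 K_C$ for all $u\in\mathscr{V}_{>0}$; (C3) for all $A,B\in K_C$ and all maps $\boldsymbol\lambda:A\times B\to\mathbb{R}^{2,+}$, $\{\boldsymbol\lambda(\mathbf u)\mathbf u:\mathbf u\in A\times B\}\in K_C$; (C4) $A\subseteq B\Rightarrow R_C(A)\subseteq R_C(B)$ for all $A,B\in\mathscr{Q}$. $\mathcal{C}$ denotes the set of coherent choice functions. For a choice function $C$, $\mathcal C_C=\{C'\in\mathcal C: C'(A)\subseteq C(A)\text{ for all }A\in\mathscr{Q}\}$ and $C$ is called consistent if $\mathcal C_C\neq\emptyset$. A set of desirable option sets is any $K\subseteq\mathscr{Q}$. It is coherent if for all $A,B\in K$: (K0) $A\setminus\{0\}\in K$; (K1) $\{0\}\notin K$; (K2) $\mathscr{V}^s_{>0}\subseteq K$; (K3) $\{\boldsymbol\lambda(\mathbf u)\mathbf u:\mathbf u\in A\times B\}\in K$ for every map $\boldsymbol\lambda:A\times B\to\mathbb{R}^{2,+}$; (K4) $A\cup Q\in K$ for all $Q\in\mathscr{Q}$. $\bar{\mathbf K}$ denotes the set of coherent sets of desirable option sets. An assessment is any subset $\mathcal{A}\subseteq\mathscr{Q}$; $\bar{\mathbf K}(\mathcal A)=\{K\in\bar{\mathbf K}:\mathcal A\subseteq K\}$, and $\mathcal A$ is called consistent if $\bar{\mathbf K}(\mathcal A)\neq\emptyset$. For a choice function $C$, $\mathcal A_C=\{C(A)-u:A\in\mathscr{Q},\ u\in R_C(A)\}$. *)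

(* Defs.v *)
From HB Require Import structures.
From mathcomp Require Import all_boot all_order all_algebra.
From mathcomp Require Import all_classical all_reals.
Set Implicit Arguments. Unset Strict Implicit. Unset Printing Implicit Defensive.
Import Order.TTheory GRing.Theory Num.Theory.
Local Open Scope ring_scope.
Local Open Scope classical_set_scope.

Section Defs.
Variables (X : Type) (R : realType).

Definition opt := X -> R.
Definition ozero : opt := fun _ => 0.
Definition osub (u v : opt) : opt := fun x => u x - v x.
Definition olin (a b : R) (u v : opt) : opt := fun x => a * u x + b * v x.

Definition ole (u v : opt) : Prop := forall x, u x <= v x.
Definition olt (u v : opt) : Prop := ole u v /\ u <> v.
Definition opos (u : opt) : Prop := olt ozero u.

Definition optset := set opt.
Definition inQ (A : optset) : Prop := finite_set A.

Definition shift (A : optset) (u : opt) : optset := [set osub v u | v in A].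

Definition pos2 (l : R * R) : Prop := 0 <= l.1 /\ 0 <= l.2 /\ 0 < l.1 + l.2.

Definition lincomb (A B : optset) (lam : opt -> opt -> R * R) : optset :=
  [set olin (lam u v).1 (lam u v).2 u v | u in A & v in B].
Definition admissible (A B : optset) (lam : opt -> opt -> R * R) : Prop :=
  forall u v, A u -> B v -> pos2 (lam u v).

(* choice functions C : Q -> Q with C(A) ⊆ A (values outside Q are irrelevant) *)
Definition choice_fun (C : optset -> optset) : Prop :=
  forall A, inQ A -> C A `<=` A.
Definition rejection (C : optset -> optset) (A : optset) : optset := A `\` C A.
Definition KC (C : optset -> optset) : set optset :=
  [set A | inQ A /\ ~ C (A `|` [set ozero]) ozero].

Definition coherent_choice (C : optset -> optset) : Prop :=
  choice_fun C /\
  (forall A, inQ A -> A !=set0 -> C A !=set0) /\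
  (forall A u, inQ A -> A u -> (C A u <-> C (shift A u) ozero)) /\
  (forall u, opos u -> KC C [set u]) /\
  (forall A B, KC C A -> KC C B -> forall lam, admissible A B lam ->
              KC C (lincomb A B lam)) /\
  (forall A B, inQ A -> inQ B -> A `<=` B ->
              rejection C A `<=` rejection C B).

Definition consistent_choice (C : optset -> optset) : Prop :=
  exists C', coherent_choice C' /\ forall A, inQ A -> C' A `<=` C A.

Definition coherent_K (K : set optset) : Prop :=
  (forall A, K A -> inQ A) /\
  (forall A, K A -> K (A `\ ozero)) /\
  ~ K [set ozero] /\
  (forall u, opos u -> K [set u]) /\
  (forall A B, K A -> K B -> forall lam, admissible A B lam ->
              K (lincomb A B lam)) /\
  (forall A Q, K A -> inQ Q -> K (A `|` Q)).

Definition assessment (Ass : set optset) : Prop := forall A, Ass A -> inQ A.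
Definition consistent_assessment (Ass : set optset) : Prop :=
  exists K, coherent_K K /\ Ass `<=` K.

Definition assessC (C : optset -> optset) : set optset :=
  [set D | exists A u, inQ A /\ rejection C A u /\ D = shift (C A) u].

End Defs.

(* Main.v *)
Require Import Defs.
From mathcomp Require Import all_boot all_order all_algebra.
From mathcomp Require Import all_classical all_reals.
Import Order.TTheory GRing.Theory Num.Theory.
Set Implicit Arguments. Unset Strict Implicit. Unset Printing Implicit Defensive.
Local Open Scope ring_scope.
Local Open Scope classical_set_scope.

Section Removal.
Variables (X : Type) (R : realType) (K : set (optset X R)).
Hypothesis hK : coherent_K K.
Let z := @ozero X R.

Lemma Kup (A B : optset X R) : K A -> inQ B -> A `<=` B -> K B.
Proof.
move=> KA QB AB; case: hK => _ [_ [_ [_ [_ K4]]]].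
by rewrite -(setUidr AB); apply: K4.
Qed.

Lemma inQ_shift (A : optset X R) u : inQ A -> inQ (shift A u).
Proof. exact: finite_image. Qed.

Lemma osubK (b v w : opt X R) : osub b v = osub w v -> b = w.
Proof.
move=> E; apply: funext => x; have := congr1 (fun f => f x) E.
by rewrite /osub => /addIr.
Qed.

Lemma pairK (B : optset X R) v v1 : inQ B -> K (shift B v) -> K (shift B v1) ->
  v <> v1 -> K (shift (B `\ v1) v).
Proof.
move=> QB KBv KBv1 nvv1.
case: hK => _ [K0 [_ [_ [K3 _]]]].
pose lam (p q : opt X R) : R * R :=
  if pselect (p = osub v1 v) then (if pselect (q = z) then (0, 1) else (1, 1))
  else (1, 0).
have adm : admissible (shift B v) (shift B v1) lam.
  move=> p q _ _; rewrite /lam /pos2.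
  case: (pselect (p = osub v1 v)) => H1; [case: (pselect (q = z)) => H2|];
    rewrite /= ?addr0 ?add0r; do ?split; rewrite ?ler01 ?ltr01 ?lexx ?addr_gt0 ?ltr01 //.
have KL := K3 _ _ KBv KBv1 lam adm.
set T := shift (B `\ v1) v.
have QT : inQ T by apply/inQ_shift/finite_setD.
have QTz : inQ (T `|` [set z]) by rewrite /inQ finite_setU; split.
have LT : lincomb (shift B v) (shift B v1) lam `<=` T `|` [set z].
  move=> w [p [b Bb <-] [q [b' Bb' <-] <-]].
  rewrite /lam; case: pselect => [Ep|nEp]; [case: pselect => [Eq|nEq]|].
  - right; rewrite /=; apply: funext => x; rewrite /olin /=.
    by rewrite mul0r mul1r add0r Eq.
  - left; have bv1 := osubK Ep; subst b.
    exists b'.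
      split=> // E; have E' : b' = v1 := E; subst b'; apply: nEq; apply: funext => x.
      by rewrite /osub /z /ozero subrr.
    apply: funext => x; rewrite /olin /osub /= !mul1r; apply: esym.
    by rewrite addrC -addrA addKr.
  - left; exists b.
      by split=> // E; have E' : b = v1 := E; subst b; apply: nEp.
    by apply: funext => x; rewrite /olin /= mul1r mul0r addr0.
have K1 := Kup KL QTz LT.
apply: Kup (K0 _ K1) QT _.
by move=> w [[//| E] nz]; exfalso; exact: nz E.
Qed.

Variable A : optset X R.
Hypothesis QA : inQ A.
Let Rj := [set w | A w /\ K (shift A w)].

Lemma indK (s : seq {classic opt X R}) :
  (forall x, x \in s -> Rj x) ->
  forall w, (A `\` [set` s]) w -> Rj w -> K (shift (A `\` [set` s]) w).
Proof.
elim: s => [|a s IH] Hs w.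
  have -> : A `\` [set` [::]] = A.
    by apply/seteqP; split=> x; [case | move=> Ax; split=> //; rewrite /= in_nil].
  by move=> _ [].
have QB : inQ (A `\` [set` s]) by apply: finite_setD.
have E : A `\` [set` (a :: s)] = (A `\` [set` s]) `\ a.
  apply/seteqP; split=> x /=.
    move=> [Ax nx]; split; [split=> // xs; apply: nx; rewrite /= in_cons xs orbT //|].
    by move=> xa; apply: nx; rewrite /= in_cons; apply/orP; left; apply/eqP.
  move=> [[Ax xs] xa]; split=> //; rewrite /= in_cons => /orP [/eqP|] H.
    exact: xa H.
  exact: xs H.
have Hs' : forall x, x \in s -> Rj x.
  by move=> x xs; apply: Hs; rewrite in_cons xs orbT.
rewrite E => Bw Rw.
have [Ba|nBa] := pselect ((A `\` [set` s]) a).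
  apply: pairK => //.
  - by apply: IH => //; case: Bw.
  - by apply: IH => //; apply: Hs; rewrite in_cons eqxx.
  - by case: Bw.
have -> : (A `\` [set` s]) `\ a = A `\` [set` s].
  by apply/seteqP; split=> x /=; [case|move=> Bx; split=> // xa; subst x].
by apply: IH => //; case: Bw.
Qed.

Lemma removal u : A u -> K (shift A u) ->
  K (shift ([set w | A w /\ ~ K (shift A w)] `|` [set u]) u).
Proof.
move=> Au KAu.
have : finite_set (Rj `\ u) by apply: sub_finite_set QA => x [[]].
move=> /(@finite_seqP {classic opt X R}) [s Es].
have Hs : forall x, x \in s -> Rj x.
  by move=> x xs; have : [set` s] x by []; rewrite -Es => -[].
have EB : A `\` [set` s] = [set w | A w /\ ~ K (shift A w)] `|` [set u].
  apply/seteqP; split=> x /=.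
    move=> [Ax nxs].
    have [->|nxu] := pselect (x = u); first by right.
    left; split=> // Kx; apply: nxs; have : (Rj `\ u) x by [].
    by rewrite Es.
  move=> [[Ax nK]|->]; split=> // xs.
    have : (Rj `\ u) x by rewrite Es.
    by move=> [[_ Kx] _]; exact: nK Kx.
  have : (Rj `\ u) u by rewrite Es.
  by move=> [_ /(_ erefl)].
rewrite -EB; apply: indK => //.
by rewrite EB; right.
Qed.

Lemma noall : A !=set0 -> (forall w, A w -> K (shift A w)) -> False.
Proof.
move=> [u Au] H.
have := removal Au (H u Au).
have -> : shift ([set w | A w /\ ~ K (shift A w)] `|` [set u]) u = [set z].
  apply/seteqP; split=> p.
    move=> [w [[Aw nK]|->] <-]; first by exfalso; apply: nK; apply: H.
    by apply: funext => x; rewrite /osub subrr.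
  move=> -> /=; exists u; first by right.
  by apply: funext => x; rewrite /osub subrr.
by case: hK => _ [_ [K1 _]].
Qed.

End Removal.

Section Main.
Variables (X : Type) (R : realType).
Let z := @ozero X R.

Lemma shift0 (A : optset X R) : shift A z = A.
Proof.
apply/seteqP; split=> p.
  move=> [v Av <-]; suff -> : osub v z = v by [].
  by apply: funext => x; rewrite /osub /z /ozero subr0.
move=> Ap; exists p => //; apply: funext => x; rewrite /osub /z /ozero subr0 //.
Qed.

Lemma shift_self (A : optset X R) u : A u -> shift A u z.
Proof. by move=> Au; exists u => //; apply: funext => x; rewrite /osub subrr. Qed.

Lemma shift_sub (A B : optset X R) u : A `<=` B -> shift A u `<=` shift B u.
Proof. by move=> AB p [v Av <-]; exists v => //; apply: AB. Qed.

Section FromK.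
Variables (K : set (optset X R)).
Hypothesis hK : coherent_K K.
Let C' (A : optset X R) : optset X R := [set u | A u /\ ~ K (shift A u)].

Lemma KC_K A : KC C' A <-> K A.
Proof.
have [QK [K0 [_ [_ [_ K4]]]]] := hK.
split.
  move=> [QA nC].
  have KAz : K (A `|` [set z]).
    apply: contrapT => nK; apply: nC; split; first by right.
    by rewrite shift0.
  apply: (Kup hK (K0 _ KAz) QA).
  by move=> w [[//|E] nz]; exfalso; exact: nz E.
move=> KA; split; first exact: QK.
move=> [_]; rewrite shift0; apply; apply: K4 => //; exact: finite_set1.
Qed.

Lemma C'_coherent : coherent_choice C'.
Proof.
have [QK [K0 [K1 [K2 [K3 K4]]]]] := hK.
split; first by move=> A _ u [].
split.
  move=> A QA A0.
  have [//|N] := pselect (C' A !=set0).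
  exfalso; apply: (noall hK QA A0) => w Aw.
  by apply: contrapT => nK; apply: N; exists w.
split.
  move=> A u QA Au; rewrite /C' /= shift0.
  split; [move=> [_ nK]; split=> //; exact: shift_self|by move=> [_ nK]].
split; first by move=> u pu; apply/KC_K; apply: K2.
split.
  move=> A B /KC_K KA /KC_K KB lam adm; apply/KC_K; exact: K3.
move=> A B QA QB AB u [Au nC].
have KAu : K (shift A u) by apply: contrapT => nK; apply: nC.
split; first by apply: AB.
move=> [_]; apply; apply: (Kup hK KAu (inQ_shift _ QB)); exact: shift_sub.
Qed.

End FromK.

Section FromC.
Variable C' : optset X R -> optset X R.
Hypothesis hC : coherent_choice C'.

Lemma KC_coherent : coherent_K (KC C').
Proof.
have [ch [C0 [C1 [C2 [C3 C4]]]]] := hC.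
split; first by move=> A [].
split.
  move=> A [QA nC]; split; first exact: finite_setD.
  have -> : (A `\ z) `|` [set z] = A `|` [set z].
    apply/seteqP; split=> w.
      by move=> [[Aw _]|->]; [left|right].
    move=> [Aw|->]; last by right.
    have [->|nz] := pselect (w = z); [right|left] => //.
  exact: nC.
split.
  move=> [Q1 nC]; apply: nC.
  have Q2 : inQ ([set z] `|` [set z]) by rewrite /inQ finite_setU; split.
  have [w Cw] := C0 _ Q2 (ex_intro _ z (or_introl erefl)).
  have := ch _ Q2 w Cw; move=> [E|E]; have E2 : w = z := E; by move: Cw; rewrite E2.
split; first exact: C2.
split; first exact: C3.
move=> A Q [QA nC] QQ; split; first by rewrite /inQ finite_setU.
have QAz : inQ (A `|` [set z]) by rewrite /inQ finite_setU; split.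
have QAQz : inQ ((A `|` Q) `|` [set z]) by rewrite /inQ !finite_setU; split.
have := C4 _ _ QAz QAQz _ z.
move=> H Cz.
have sub : A `|` [set z] `<=` A `|` Q `|` [set z].
  by move=> w [Aw|->]; [left; left|right].
have [_ ] := H sub (conj (or_intror erefl) nC); apply; exact: Cz.
Qed.

Lemma C'_K (B : optset X R) u : inQ B -> B u -> (C' B u <-> ~ KC C' (shift B u)).
Proof.
have [ch [C0 [C1 [C2 [C3 C4]]]]] := hC.
move=> QB Bu; rewrite (C1 _ _ QB Bu).
have E : shift B u `|` [set ozero R] = shift B u.
  by apply: setUidl => w ->; apply: shift_self.
split; first by move=> Cz [_ nC]; apply: nC; rewrite E.
move=> nK; apply: contrapT => nCz; apply: nK; split; first exact: inQ_shift.
by rewrite E.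
Qed.

End FromC.

End Main.

Theorem mainTheorem17 (X : Type) (R : realType) (x0 : X)
  (C : optset X R -> optset X R) :
  choice_fun C ->
  (consistent_choice C <-> consistent_assessment (assessC C)).
Proof.
move=> chC; split.
  move=> [C' [hC sub]].
  have hK := KC_coherent hC.
  exists (KC C'); split => //.
  move=> D [A [u [QA [[Au nCu] ->]]]].
  have nC'u : ~ C' A u by move=> /(sub _ QA).
  have KAu : KC C' (shift A u).
    by apply: contrapT => nK; apply: nC'u; apply/(C'_K hC QA Au).
  have QCA : inQ (shift (C A) u) by apply/inQ_shift/(sub_finite_set (chC _ QA)).
  have QCAz : inQ (shift (C A) u `|` [set ozero R]).
    by rewrite /inQ finite_setU; split.
  have K1 := Kup hK (removal hK QA Au KAu) QCAz.
  have [_ [K0 _]] := hK.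
  apply: (Kup hK (K0 _ (K1 _))) => //; last first.
    by move=> w [[//|E] nz]; exfalso; exact: nz E.
  move=> p [w [[Aw nKw]|->] <-]; last first.
    by right; apply: funext => x; rewrite /osub subrr.
  left; exists w => //; apply: contrapT => nCw.
  have nC'w : ~ C' A w by move=> /(sub _ QA).
  by apply: nKw; apply: contrapT => nK; apply: nC'w; apply/(C'_K hC QA Aw).
move=> [K [hK sub]].
exists (fun A => [set u | A u /\ ~ K (shift A u)]); split.
  exact: C'_coherent.
move=> A QA u [Au nK]; apply: contrapT => nCu; apply: nK.
have : assessC C (shift (C A) u) by exists A, u.
move=> /sub KCA.
apply: (Kup hK KCA (inQ_shift _ QA)); exact: shift_sub (chC _ QA).
Qed.
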